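(* Define, for $x\in\mathcal N$, $$f(x)=\mathbb{E}_x[V(x-D+\xi)]-\mathbb{E}_x[V(x-D)] = \sum_{d=0}^x\tbinom{x}{d}\big(\tfrac qx\big)^d\big(1-\tfrac qx\big)^{x-d}\,p\,\big(V(x+1-d)-V(x-d)\big).$$ Then $f(x+1)-f(x)\ge0$ for all $x\in\mathcal N$, i.e. $f$ is nondecreasing.
   Context: Single-server problem: Bernoulli($p$) arrivals $\xi$, departures $D\sim\mathrm{Binomial}(x,q/x)$ given state $x\ge1$ (no departures at $x=0$), queue $X_{t+1}=X_t-D_{t+1}+\nu_t\xi_{t+1}$, $\nu\in\{0,1\}$; $C>0$, $1>q>2p>0$, $\lambda\in\mathbb R$, cost $c(x,\nu)=Cx+(1-\nu)\lambda$. $V$ is the average-cost relative value function solving $V(x)=Cx-\beta+\min\big(\mathbb{E}_x[pV(x-D+1)+(1-p)V(x-D)],\ \lambda+\mathbb{E}_x[V(x-D)]\big)$, $V(0)=0$; $V$ is nondecreasing and has increasing differences ($V(x+z)-V(x)\ge V(y+z)-V(y)$ for $z>0$, $x>y$). *)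

(* Defs.v *)
From Stdlib Require Import Reals Lra Lia.
Open Scope R_scope.

(* P(D = d | X = x) for D ~ Binomial(x, q/x).  At x = 0 this gives
   weight 1 on d = 0 (pow _ 0 = 1), i.e. no departures at x = 0. *)
Definition binpmf (q : R) (x d : nat) : R :=
  C x d * (q / INR x) ^ d * (1 - q / INR x) ^ (x - d).

Definition Ex (q : R) (x : nat) (g : nat -> R) : R :=
  sum_f_R0 (fun d => binpmf q x d * g (x - d)%nat) x.

Definition bellman (p q Ccost lam beta : R) (V : nat -> R) : Prop :=
  forall x : nat,
    V x = Ccost * INR x - beta
          + Rmin (Ex q x (fun y => p * V (y + 1)%nat + (1 - p) * V y))
                 (lam + Ex q x V).

Definition fV (p q : R) (V : nat -> R) (x : nat) : R :=
  sum_f_R0 (fun d => binpmf q x d * p * (V (x - d + 1)%nat - V (x - d)%nat)) x.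

(* Main.v *)
Require Import Defs.
From Stdlib Require Import Reals Lra Lia.
Open Scope R_scope.

Fixpoint cb (n k : nat) : R :=
  match n, k with
  | O, O => 1
  | O, S _ => 0
  | S _, O => 1
  | S n', S k' => cb n' k' + cb n' (S k')
  end.

Lemma cb_n0 n : cb n 0 = 1.
Proof. destruct n; reflexivity. Qed.

Lemma cb_big n : forall k, (n < k)%nat -> cb n k = 0.
Proof.
  induction n; intros k Hk; destruct k; try lia; simpl; auto.
  rewrite !IHn by lia. lra.
Qed.


Lemma cb_ge0 n : forall k, 0 <= cb n k.
Proof.
  induction n; intros k; destruct k; simpl; try lra.
  pose proof (IHn k); pose proof (IHn (S k)); lra.
Qed.

Lemma C_n0 n : C n 0 = 1.
Proof. unfold C. rewrite Nat.sub_0_r. change (Factorial.fact 0) with 1%nat. rewrite INR_1.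
  field. apply INR_fact_neq_0. Qed.

Lemma C_nn n : C n n = 1.
Proof. unfold C. rewrite Nat.sub_diag. change (Factorial.fact 0) with 1%nat. rewrite INR_1.
  field. apply INR_fact_neq_0. Qed.

Lemma cb_C n : forall k, (k <= n)%nat -> cb n k = C n k.
Proof.
  induction n; intros k Hk.
  - destruct k; [|lia]. rewrite C_n0. reflexivity.
  - destruct k. + rewrite C_n0; reflexivity.
    + simpl. destruct (Nat.eq_dec k n) as [->|Hne].
      * rewrite (cb_big n (S n)) by lia. rewrite IHn by lia. rewrite !C_nn. lra.
      * rewrite !IHn by lia. apply pascal. lia.
Qed.

Definition G (n : nat) (a : R) (g : nat -> R) : R :=
  sum_f_R0 (fun d => cb n d * a ^ d * (1 - a) ^ (n - d) * g (n - d)%nat) n.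

Lemma G0 a g : G 0 a g = g 0%nat.
Proof. unfold G. simpl. ring. Qed.

Lemma Grec n a g : G (S n) a g = (1 - a) * G n a (fun k => g (S k)) + a * G n a g.
Proof.
  unfold G.
  rewrite decomp_sum by lia. simpl pred.
  rewrite (sum_eq _ (fun i => cb n i * a ^ (S i) * (1-a)^(n-i) * g (n-i)%nat
      + cb n (S i) * a ^ (S i) * (1-a)^(n-i) * g (n-i)%nat)).
  2:{ intros i _. simpl cb. replace (S n - S i)%nat with (n - i)%nat by lia. ring. }
  rewrite plus_sum.
  set (U := fun d => cb n d * a ^ d * (1 - a) ^ (S n - d) * g (S n - d)%nat).
  assert (HU : sum_f_R0 U (S n) = U 0%nat + sum_f_R0 (fun i => U (S i)) n).
  { rewrite decomp_sum by lia. reflexivity. }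
  assert (HU2 : sum_f_R0 U (S n) = sum_f_R0 U n).
  { simpl. unfold U at 2. rewrite cb_big by lia. ring. }
  assert (E1 : sum_f_R0 U n = (1 - a) * sum_f_R0 (fun d => cb n d * a ^ d * (1 - a) ^ (n - d) * g (S (n - d))) n).
  { rewrite scal_sum. apply sum_eq. intros i Hi. unfold U.
    replace (S n - i)%nat with (S (n - i)) by lia. simpl. ring. }
  assert (E2 : sum_f_R0 (fun i => cb n i * a ^ (S i) * (1-a)^(n-i) * g (n-i)%nat) n
     = a * sum_f_R0 (fun d => cb n d * a ^ d * (1 - a) ^ (n - d) * g (n - d)%nat) n).
  { rewrite scal_sum. apply sum_eq. intros i Hi. simpl. ring. }
  assert (E3 : sum_f_R0 (fun i => U (S i)) n =
     sum_f_R0 (fun i => cb n (S i) * a ^ (S i) * (1-a)^(n-i) * g (n-i)%nat) n).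
  { apply sum_eq. intros i Hi. unfold U. reflexivity. }
  assert (E4 : U 0%nat = cb (S n) 0 * a ^ 0 * (1 - a) ^ (S n - 0) * g (S n - 0)%nat).
  { unfold U. rewrite !cb_n0. reflexivity. }
  rewrite E2. rewrite <- E1, <- HU2, HU, E3, E4. ring.
Qed.

Definition nondec (g : nat -> R) := forall i j, (i <= j)%nat -> g i <= g j.

Lemma G_mono_g n a g h : 0 <= a <= 1 -> (forall k, g k <= h k) -> G n a g <= G n a h.
Proof.
  intros Ha Hgh. unfold G. apply sum_Rle. intros d _.
  apply Rmult_le_compat_l; [|apply Hgh].
  apply Rmult_le_pos; [apply Rmult_le_pos|]; [apply cb_ge0| apply pow_le; lra | apply pow_le; lra].
Qed.

Lemma G_shift n a g : 0 <= a <= 1 -> nondec g -> G n a g <= G n a (fun k => g (S k)).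
Proof. intros Ha Hg. apply G_mono_g; [exact Ha|]. intros k; apply Hg; lia. Qed.

Lemma G_up n a g : 0 <= a <= 1 -> nondec g -> G n a g <= G (S n) a g.
Proof.
  intros Ha Hg. rewrite Grec. pose proof (G_shift n a g Ha Hg). nra.
Qed.

Lemma G_anti n : forall g a b, 0 <= a -> a <= b -> b <= 1 -> nondec g -> G n b g <= G n a g.
Proof.
  induction n; intros g a b H1 H2 H3 Hg.
  - rewrite !G0. lra.
  - rewrite !Grec.
    assert (HgS : nondec (fun k => g (S k))) by (intros i j Hij; apply Hg; lia).
    pose proof (IHn _ a b H1 H2 H3 HgS).
    pose proof (IHn _ a b H1 H2 H3 Hg).
    assert (Hb : 0 <= b <= 1) by lra.
    pose proof (G_shift n b g Hb Hg).
    assert (0 <= 1 - a) by lra.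
    nra.
Qed.

Theorem mainTheorem7 (p q Ccost lam beta : R) (V : nat -> R)
  (hC : 0 < Ccost) (hp : 0 < p) (h2p : 2 * p < q) (hq : q < 1)
  (hbell : bellman p q Ccost lam beta V) (hV0 : V 0%nat = 0)
  (hmono : forall x y : nat, (x <= y)%nat -> V x <= V y)
  (hincr : forall x y z : nat, (0 < z)%nat -> (y < x)%nat ->
             V (x + z)%nat - V x >= V (y + z)%nat - V y) :
  forall x : nat, fV p q V (x + 1)%nat - fV p q V x >= 0.
Proof.
  set (Dl := fun k : nat => V (k + 1)%nat - V k).
  assert (HD : nondec Dl).
  { intros i j Hij. unfold Dl. destruct (Nat.eq_dec i j) as [->|Hne]; [lra|].
    pose proof (hincr j i 1%nat ltac:(lia) ltac:(lia)). lra. }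
  assert (HfV : forall x, fV p q V x = p * G x (q / INR x) Dl).
  { intros x. unfold fV, G. rewrite scal_sum. apply sum_eq. intros d Hd.
    unfold binpmf, Dl. rewrite cb_C by lia. ring. }
  intros x. rewrite !HfV. rewrite Nat.add_1_r.
  assert (Hq0 : 0 < q) by lra.
  assert (Hle : G x (q / INR x) Dl <= G (S x) (q / INR (S x)) Dl).
  { destruct x as [|m].
    - rewrite G0. rewrite <- (G0 (q / INR 1) Dl). apply G_up; auto.
      simpl INR. split; [apply Rlt_le, Rdiv_lt_0_compat; lra|].
      unfold Rdiv. rewrite Rinv_1. lra.
    - assert (Hm : 1 <= INR (S m)) by (rewrite S_INR; pose proof (pos_INR m); lra).
      assert (Hm2 : INR (S m) < INR (S (S m))) by (rewrite (S_INR (S m)); lra).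
      assert (A1 : 0 <= q / INR (S (S m))) by (apply Rlt_le, Rdiv_lt_0_compat; lra).
      assert (A2 : q / INR (S (S m)) <= q / INR (S m)).
      { apply Rmult_le_compat_l; [lra|]. apply Rlt_le, Rinv_lt_contravar; nra. }
      assert (A3 : q / INR (S m) <= 1).
      { apply (Rmult_le_reg_r (INR (S m))); [lra|]. unfold Rdiv.
        rewrite Rmult_assoc, Rinv_l by lra. lra. }
      eapply Rle_trans. apply (G_anti (S m) Dl _ _ A1 A2 A3 HD).
      apply G_up; auto. lra. }
  nra.
Qed.
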